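(* Let $k\ge 2$ and let $\mathcal{U}_k$ be the graph with vertex set $\{v_1,\ldots,v_{3k-2}\}$ in which, for $i\ne j$, $v_i$ and $v_j$ are adjacent if and only if (up to swapping $i$ and $j$) one of the following holds: (1) $1\le i,j\le k$; (2) $1\le i\le k$ and $k+1\le j\le 2k-1$; (3) $k+1\le i\le 2k-1$ and $2k\le j\le 3k-2$; (4) $1\le i\le k-1$ and $2k\le j\le 3k-i-1$. Then $m(\mathcal{U}_k)=k+1$.
   Context: All graphs are finite, simple and undirected. A list assignment $L$ for a graph $G$ assigns to each vertex $v$ a set $L(v)$ of colors; an $L$-coloring is a proper vertex coloring $c$ of $G$ with $c(v)\in L(v)$ for every vertex $v$. A $k$-list assignment is a list assignment with $|L(v)|=k$ for all $v$. $G$ is uniquely $k$-list colorable (U$k$LC) if there exists a $k$-list assignment $L$ such that $G$ has exactly one $L$-coloring. $G$ has property $M(k)$ if it is not U$k$LC, i.e. for every $k$-list assignment $L$, $G$ has either no $L$-coloring or at least two $L$-colorings. The m-number $m(G)$ is the least integer $k\ge 1$ such that $G$ has property $M(k)$. (Every U$k$LC graph is also U$(k-1)$LC, so $G$ is U$k$LC iff $k<m(G)$.) *)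

(* Defs.v *)
From mathcomp Require Import all_boot.
Set Implicit Arguments. Unset Strict Implicit. Unset Printing Implicit Defensive.

(* A finite simple graph on a finType T is given by an adjacency relation
   [adj : rel T], assumed symmetric and irreflexive where relevant.
   Colors are natural numbers (any finite set of colors can be renamed). *)

Section ListColoring.
Variables (T : finType) (adj : rel T).

Definition klist_assignment (k : nat) (L : T -> seq nat) : Prop :=
  forall v, uniq (L v) /\ size (L v) = k.

Definition L_coloring (L : T -> seq nat) (c : T -> nat) : Prop :=
  (forall v, c v \in L v) /\ (forall u v, adj u v -> c u <> c v).

Definition UkLC (k : nat) : Prop :=
  exists L, klist_assignment k L /\
    exists c, L_coloring L c /\
      forall c', L_coloring L c' -> forall v, c' v = c v.

Definition property_M (k : nat) : Prop := ~ UkLC k.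

Definition is_m_number (m : nat) : Prop :=
  1 <= m /\ property_M m /\ (forall j, 1 <= j -> j < m -> ~ property_M j).

End ListColoring.

(* The graph U_k on vertices 'I_(3k-2); ordinal i stands for v_(i+1). *)
Definition U_cond (k i j : nat) : bool :=
  [|| (1 <= i <= k) && (1 <= j <= k),
      (1 <= i <= k) && (k + 1 <= j <= 2 * k - 1),
      (k + 1 <= i <= 2 * k - 1) && (2 * k <= j <= 3 * k - 2)
    | (1 <= i <= k - 1) && (2 * k <= j <= 3 * k - i - 1)].

Definition U_adj (k : nat) : rel 'I_(3 * k - 2) :=
  fun a b => (a != b) &&
    (U_cond k (val a).+1 (val b).+1 || U_cond k (val b).+1 (val a).+1).
Arguments U_adj k : clear implicits.

(* Main.v *)
Require Import Defs.
From mathcomp Require Import all_boot all_algebra zify.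
Set Implicit Arguments. Unset Strict Implicit. Unset Printing Implicit Defensive.
Import GRing.Theory Num.Theory.

Definition Eset n (adj : rel 'I_n) (p : 'I_n * 'I_n) : bool :=
  (p.1 < p.2)%N && (adj p.1 p.2 || adj p.2 p.1).


Lemma UadjE k (u v : 'I_(3*k-2)) :
  U_adj k u v = ((u : nat) != (v : nat)) && (U_cond k ((u : nat)).+1 ((v : nat)).+1 || U_cond k ((v : nat)).+1 ((u : nat)).+1).
Proof. by []. Qed.

Lemma adjKK k (u v : 'I_(3*k-2)) : (u : nat) < k -> (v : nat) < k -> (u : nat) != (v : nat) -> U_adj k u v.
Proof. rewrite UadjE /U_cond => *. lia. Qed.

Lemma adjKA k (u v : 'I_(3*k-2)) : (u : nat) < k -> k <= (v : nat) < 2*k-1 -> U_adj k u v.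
Proof. rewrite UadjE /U_cond => *. lia. Qed.

Lemma adjAB k (u v : 'I_(3*k-2)) : k <= (u : nat) < 2*k-1 -> 2*k-1 <= (v : nat) -> U_adj k u v.
Proof. rewrite UadjE => *. have := ltn_ord v => ?. apply/andP; split; first lia.
apply/orP; left; rewrite /U_cond; apply/or4P; constructor 3; lia. Qed.

Lemma adjBK k (u v : 'I_(3*k-2)) : 2*k-1 <= (u : nat) -> (v : nat) < 3*k-2 - (u : nat) -> U_adj k u v.
Proof. rewrite UadjE => *. have := ltn_ord u => ?. apply/andP; split; first lia.
apply/orP; right; rewrite /U_cond; apply/or4P; constructor 4; lia. Qed.

Definition cU k (v : 'I_(3*k-2)) : nat :=
  if (v : nat) < 2*k-1 then (v : nat) else 3*k-2 - (v : nat).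

Definition LU k (v : 'I_(3*k-2)) : seq nat :=
  if (v : nat) < k then iota 0 k
  else if (v : nat) < 2*k-1 then (v : nat) :: iota 0 (k-1)
  else (3*k-2 - (v : nat)) :: iota k (k-1).

Lemma LU_klist k : 1 <= k -> klist_assignment k (@LU k).
Proof.
move=> hk v; rewrite /LU; have := ltn_ord v.
case: ifP => h1; first by rewrite iota_uniq size_iota.
case: ifP => h2 hv /=; rewrite iota_uniq size_iota mem_iota andbT; split; try lia.
Qed.

Lemma cU_col k : 2 <= k -> L_coloring (U_adj k) (@LU k) (@cU k).
Proof.
move=> hk; split.
  move=> v; rewrite /LU /cU; have := ltn_ord v.
  case: (ltnP v k) => h1 hv.
    have -> : v < 2*k-1 by lia.
    rewrite mem_iota; lia.
  by case: ifP => h2; rewrite inE eqxx.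
move=> u v; rewrite UadjE /U_cond /cU; have := ltn_ord u; have := ltn_ord v.
case: ifP; case: ifP; lia.
Qed.

Lemma cU_uniq k : 2 <= k -> forall c', L_coloring (U_adj k) (@LU k) c' ->
  forall v, c' v = cU v.
Proof.
move=> hk c' [cin cpr].
have hkn : k <= 3*k-2 by lia.
have cK (j : 'I_(3*k-2)) : (j : nat) < k -> c' j < k.
  move=> hj; have := cin j; rewrite /LU hj mem_iota; lia.
pose f (i : 'I_k) : 'I_k := Ordinal (cK (widen_ord hkn i) (ltn_ord i)).
have finj : injective f.
  move=> i j /(congr1 val) /= E.
  apply/val_inj/eqP; apply/negP => /negP ne.
  exact: (cpr _ _ (@adjKK k (widen_ord hkn i) (widen_ord hkn j) (ltn_ord i) (ltn_ord j) ne) E).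
have step1 y : y < k -> exists2 j : 'I_(3*k-2), (j : nat) < k & c' j = y.
  move=> hy.
  have := inj_card_onto finj (leqnn _) (Ordinal hy).
  move=> /codomP [i /(congr1 val) /= ->].
  by exists (widen_ord hkn i) => //=; exact: ltn_ord.
have step2 (v : 'I_(3*k-2)) : k <= (v : nat) < 2*k-1 -> c' v = (v : nat).
  move=> hv; have := cin v; rewrite /LU.
  have -> : ((v : nat) < k) = false by lia.
  have -> : ((v : nat) < 2*k-1) by lia.
  rewrite inE mem_iota => /orP [/eqP //|hy].
  have [j hj E] := step1 (c' v) ltac:(lia).
  by case: (cpr _ _ (adjKA hj hv) E).
have step3 (v : 'I_(3*k-2)) : 2*k-1 <= (v : nat) -> c' v = 3*k-2 - (v : nat).
  move=> hv; have := cin v; rewrite /LU.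
  have -> : ((v : nat) < k) = false by lia.
  have -> : ((v : nat) < 2*k-1) = false by lia.
  rewrite inE mem_iota => /orP [/eqP //|hy].
  have hw : c' v < 3*k-2 by lia.
  have hw2 : k <= nat_of_ord (Ordinal hw) < 2*k-1 by rewrite /=; lia.
  have := step2 _ hw2 => /= E.
  by case: (cpr _ _ (adjAB hw2 hv) E).
have step4a (j : 'I_(3*k-2)) : (j : nat) < k -> c' j <= (j : nat).
  move=> hj; rewrite leqNgt; apply/negP => hlt.
  have hcj := cK j hj.
  have hw : 3*k-2 - c' j < 3*k-2 by lia.
  have hw2 : 2*k-1 <= nat_of_ord (Ordinal hw) by rewrite /=; lia.
  have := step3 _ hw2 => /= E.
  have hadj : U_adj k (Ordinal hw) j by apply: adjBK => //=; lia.
  apply: (cpr _ _ hadj); rewrite E; lia.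
have step4 m : forall j : 'I_(3*k-2), (j : nat) = m -> m < k -> c' j = (j : nat).
  elim/ltn_ind: m => m IH j hjm hm.
  have := step4a j ltac:(lia); rewrite leq_eqVlt => /orP [/eqP //|hlt].
  have hi : c' j < 3*k-2 by lia.
  have E := IH (c' j) ltac:(lia) (Ordinal hi) erefl ltac:(lia).
  have hadj : U_adj k (Ordinal hi) j by apply: adjKK => /=; lia.
  by case: (cpr _ _ hadj E).
move=> v; rewrite /cU.
case: (ltnP ((v : nat)) k) => h1.
  have -> : (v : nat) < 2*k-1 by lia.
  exact: step4.
case: ifP => h2.
  by apply: step2; lia.
by apply: step3; lia.
Qed.

Lemma U_UkLC k : 2 <= k -> UkLC (U_adj k) k.
Proof.
move=> hk; exists (@LU k); split; first by apply: LU_klist; lia.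
exists (@cU k); split; first exact: cU_col.
exact: cU_uniq.
Qed.

Lemma UkLC_mono (T : finType) (adj : rel T) k j : UkLC adj k -> 1 <= j <= k -> UkLC adj j.
Proof.
move=> [L [hL [c [[cin cpr] cu]]]] /andP [hj1 hjk].
pose L' v := c v :: take j.-1 [seq x <- L v | x != c v].
have sz v : size [seq x <- L v | x != c v] = k.-1.
  rewrite size_filter.
  have := count_predC (pred1 (c v)) (L v).
  rewrite (proj2 (hL v)) count_uniq_mem ?(proj1 (hL v)) // cin.
  have -> : count (predC (pred1 (c v))) (L v) = count (fun x => x != c v) (L v) by [].
  lia.
exists L'; split.
  move=> v; rewrite /L' /= size_take sz; split; last by case: ifP; lia.
  apply/andP; split.
    by apply/negP => /mem_take; rewrite mem_filter eqxx.
  by apply: take_uniq; apply: filter_uniq; exact: (proj1 (hL v)).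
exists c; split.
  by split => // v; rewrite inE eqxx.
move=> c' [c'in c'pr]; apply: cu; split => // v.
have := c'in v; rewrite inE => /orP [/eqP -> //|/mem_take].
by rewrite mem_filter => /andP [].
Qed.


Lemma cnt_int n lo hi : \sum_(j < n) (lo <= j < hi : nat) = minn n hi - lo.
Proof.
elim: n => [|n IH]; first by rewrite big_ord0; lia.
rewrite big_ord_recr /= IH.
case: (boolP (lo <= n < hi)) => /= h; lia.
Qed.

Lemma sum_tri n c : 2 * \sum_(i < n) (c - i.+1) = minn n c * (2 * c - minn n c - 1).
Proof.
elim: n => [|n IH]; first by rewrite big_ord0 min0n.
rewrite big_ord_recr /= mulnDr IH.
case: (leqP c n) => h.
  have E1 : minn n.+1 c = c by lia.
  have E2 : minn n c = c by lia.
  have E3 : c - n.+1 = 0 by lia.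
  by rewrite ?E1 ?E2 E3 muln0 addn0.
have E1 : minn n.+1 c = n.+1 by lia.
have E2 : minn n c = n by lia.
rewrite ?E1 ?E2; nia.
Qed.


Lemma region k i j : i < j -> j < 3*k-2 -> (U_cond k i.+1 j.+1 || U_cond k j.+1 i.+1) ->
  [|| j < k, (i<k) && (k <= j < 2*k-1), (k <= i < 2*k-1) && (2*k-1 <= j) | (i < k-1) && (2*k-1 <= j) && (j < 3*k-2-i)].
Proof.
move=> hij hj; rewrite /U_cond.
case/orP => /or4P [] /andP [/andP [h1 h2] /andP [h3 h4]]; apply/or4P.
all: first [ by constructor 1; lia | by constructor 2; lia | by constructor 3; lia | by constructor 4; lia | lia ].
Qed.

Lemma cnt_int2 n (a : bool) lo hi : \sum_(j < n) ((a && (lo <= j < hi)) : nat) = a * (minn n hi - lo).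
Proof. by case: a; rewrite ?mul1n ?mul0n ?cnt_int // big1. Qed.

Lemma natb_and (a b : bool) : ((a && b) : nat) = a * b.
Proof. by case: a; case: b. Qed.

Lemma edge_count k : 2 <= k ->
  #|{: {p : 'I_(3*k-2) * 'I_(3*k-2) | Eset (U_adj k) p}}| < k * (3*k-2).
Proof.
move=> hk.
pose bnd (i j : nat) : nat := (i.+1 <= j < k) + ((0 <= i < k) && (k <= j < 2*k-1) : nat)
   + ((k <= i < 2*k-1) && (2*k-1 <= j < (3*k-2)) : nat) + ((0 <= i < k-1) && (2*k-1 <= j < 3*k-2-i) : nat).
rewrite card_sig -sum1_card big_mkcond /=.
apply: (@leq_ltn_trans (\sum_(p : 'I_(3*k-2) * 'I_(3*k-2)) bnd p.1 p.2)).
  apply: leq_sum => [[i j]] _; rewrite inE /Eset /=.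
  case: ifP => // /andP [hij hadj].
  have hr : U_cond k (i : nat).+1 (j : nat).+1 || U_cond k (j : nat).+1 (i : nat).+1.
    by case/orP: hadj; rewrite UadjE => /andP [_ h] //; rewrite orbC.
  have hjn : (j : nat) < 3*k-2 by exact: ltn_ord.
  move: (region hij hjn hr); rewrite /bnd.
  case/or4P => h; lia.
rewrite -(pair_bigA _ (fun (i j : 'I_(3*k-2)) => bnd i j)) /=.
have inner (i : 'I_(3*k-2)) : \sum_(j < (3*k-2)) bnd i j =
   (minn (3*k-2) k - i.+1) + (0 <= i < k) * (minn (3*k-2) (2*k-1) - k)
   + (k <= i < 2*k-1) * (minn (3*k-2) (3*k-2) - (2*k-1)) + (0 <= i < k-1) * (minn (3*k-2) (3*k-2-i) - (2*k-1)).
  by rewrite /bnd !big_split /= !cnt_int2 cnt_int.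
under eq_bigr do rewrite inner.
apply: (@leq_ltn_trans (\sum_(i < (3*k-2)) ((k - i.+1) + (k - i.+1) + (0 <= i < k) * (k-1) + (k <= i < 2*k-1) * (k-1)))).
  apply: leq_sum => i _; have := ltn_ord i; lia.
rewrite !big_split -!big_distrl !cnt_int.
have := sum_tri (3*k-2) k.
have E1 : minn (3*k-2) k = k by lia.
have E2 : minn (3*k-2) (2*k-1) = 2*k-1 by lia.
rewrite /= E1 E2 => H.
have E3 : 2*k - k - 1 = k - 1 by lia.
have E4 : 2*k - 1 - k = k - 1 by lia.
rewrite E3 subn0 E4 in H *.
have E5 : (k-1)*(k-1) + (k-1) = k*(k-1).
  by clear -hk; case: k hk => // k' _; rewrite subn1 /= mulSn addnC.
have E6 : k * (3*k-2) = 3 * (k*(k-1)) + k.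
  by clear -hk; case: k hk => // k' _; rewrite subn1 /=; nia.
rewrite E6; lia.
Qed.



Notation ET adj := {p : _ | Eset adj p}.

Open Scope ring_scope.
Lemma prod_partition (R : comNzRingType) (I J : finType) (phi : I -> J) (G : J -> R) :
  \prod_(i : I) G (phi i) = \prod_(j : J) G j ^+ #|[pred i | phi i == j]|.
Proof.
rewrite (partition_big phi xpredT) //; apply: eq_bigr => j _.
rewrite -prodr_const; by apply: eq_big => i //= /eqP ->.
Qed.

Lemma sum_partition (I J : finType) (phi : I -> J) :
  (\sum_(j : J) #|[pred i | phi i == j]| = #|{: I}|)%N.
Proof.
rewrite -sum1_card (partition_big phi xpredT) //=; apply: eq_bigr => j _.
by rewrite -sum1_card.
Qed.

Lemma lagr0 (F : fieldType) (M a : nat) (t : 'I_M -> F) :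
  injective t -> (a.+1 < M)%N ->
  \sum_(j < M) t j ^+ a / \prod_(l < M | l != j) (t j - t l) = 0.
Proof.
move=> tinj aM.
pose N j := \prod_(l < M | l != j) (t j - t l).
have Nn0 j : N j != 0.
  apply/prodf_neq0 => l hl; rewrite subr_eq0; apply/eqP => /tinj E.
  by rewrite E eqxx in hl.
pose B j : {poly F} := \prod_(l < M | l != j) ('X - (t l)%:P).
have Bm j : B j \is monic by apply: monic_prod => l _; exact: monicXsubC.
have sB j : size (B j) = M.
  rewrite size_prod; last by move=> l _; rewrite polyXsubC_eq0.
  under eq_bigr do rewrite size_XsubC.
  rewrite sum_nat_const.
  have -> : #|(fun l : 'I_M => l != j)| = M.-1.
    have := cardC1 j; rewrite card_ord => <-; exact: eq_card.
  case: M aM {t tinj N Nn0 B Bm} j => // M _ j /=.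
  lia.
pose P := \sum_(j < M) (t j ^+ a / N j) *: B j.
have hP i : P.[t i] = t i ^+ a.
  rewrite horner_sum (bigD1 i) //= big1 ?addr0.
    rewrite hornerZ horner_prod.
    under eq_bigr do rewrite hornerXsubC.
    by rewrite -/(N i) divfK.
  move=> j hj; rewrite hornerZ horner_prod (bigD1 i) /=; last by rewrite eq_sym.
  by rewrite hornerXsubC subrr mul0r mulr0.
have Q0 : P - 'X^a = 0.
  apply/eqP; apply/negPn/negP => Qn0.
  have := max_poly_roots Qn0 (rs := [seq t i | i <- enum 'I_M]).
  rewrite size_map size_enum_ord.
  have -> : all (root (P - 'X^a)) [seq t i | i <- enum 'I_M].
    apply/allP => x /mapP [i _ ->].
    by rewrite /root hornerD hornerN hornerXn hP subrr.
  rewrite map_inj_uniq ?enum_uniq // => /(_ isT isT).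
  apply/negP; rewrite -leqNgt.
  apply: leq_trans (size_polyD _ _) _.
  rewrite geq_max size_polyN size_polyXn (ltnW aM) andbT.
  apply: leq_trans (size_sum _ _ _) _.
  apply/bigmax_leqP_seq => j _ _.
  by apply: leq_trans (size_scale_leq _ _) _; rewrite sB.
have := congr1 (fun p : {poly F} => p`_M.-1) Q0.
rewrite coef0 coefB coefXn coef_sum.
have -> : (M.-1 == a) = false.
  by apply/negbTE; rewrite neq_ltn; apply/orP; right; case: M aM {t tinj N Nn0 B Bm sB P hP Q0}.
rewrite subr0 => E.
apply: etrans E; apply: eq_bigr => j _.
rewrite coefZ.
have : lead_coef (B j) = 1 by apply/monicP.
by rewrite lead_coefE sB => ->; rewrite mulr1.
Qed.

Section AF.
Variables (n M : nat) (adj : rel 'I_n) (L : 'I_n -> seq nat).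
Hypothesis hL : forall v, uniq (L v) /\ size (L v) = M.

Definition pt v (j : 'I_M) : rat := (nth 0%N (L v) j)%:R.
Definition Nf v (j : 'I_M) : rat := \prod_(l < M | l != j) (pt v j - pt v l).
Definition Wt (g : {ffun 'I_n -> 'I_M}) : rat := \prod_v (Nf v (g v))^-1.
Definition Fv (g : {ffun 'I_n -> 'I_M}) : rat :=
  \prod_(e : ET adj) (pt (val e).1 (g (val e).1) - pt (val e).2 (g (val e).2)).

Lemma pt_inj v : injective (pt v).
Proof.
move=> i j /eqP; rewrite /pt eqr_nat nth_uniq ?(proj2 (hL v)) ?ltn_ord ?(proj1 (hL v)) //.
by move/eqP/val_inj.
Qed.

Lemma AF_sum0 : (#|{: ET adj}| < M.-1 * n)%N -> \sum_g Wt g * Fv g = 0.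
Proof.
move=> hE.
have -> : \sum_g Wt g * Fv g = \sum_(h : {ffun ET adj -> bool}) \sum_g Wt g *
   \prod_(e : ET adj) (if h e then pt (val e).1 (g (val e).1) else - pt (val e).2 (g (val e).2)).
  rewrite exchange_big /=; apply: eq_bigr => g _.
  rewrite -mulr_sumr /Fv; congr (_ * _).
  rewrite (eq_bigr (fun e : ET adj => \sum_(b : bool) (if b then pt (val e).1 (g (val e).1) else - pt (val e).2 (g (val e).2)))); last by move=> e _; rewrite big_bool.
  by rewrite bigA_distr_bigA.
apply: big1 => h _.
pose phi (e : ET adj) := if h e then (val e).1 else (val e).2.
pose a v := #|[pred e | phi e == v]|.
pose sgn := \prod_(e : ET adj) (if h e then 1 else -1 : rat).
have E1 g : \prod_(e : ET adj) (if h e then pt (val e).1 (g (val e).1) else - pt (val e).2 (g (val e).2))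
   = sgn * \prod_v pt v (g v) ^+ a v.
  rewrite -(prod_partition phi (fun v => pt v (g v))) -big_split /=.
  by apply: eq_bigr => e _; rewrite /phi; case: (h e); rewrite ?mul1r ?mulN1r.
under eq_bigr do rewrite E1 mulrCA.
rewrite -mulr_sumr.
have -> : \sum_g Wt g * \prod_v pt v (g v) ^+ a v =
   \prod_v \sum_(j < M) (Nf v j)^-1 * pt v j ^+ a v.
  rewrite bigA_distr_bigA /=; apply: eq_bigr => g _.
  by rewrite /Wt -big_split.
have [v0 hv0] : exists v0, ((a v0).+1 < M)%N.
  case/boolP: [exists v, ((a v).+1 < M)%N] => [/existsP // | Hn].
  exfalso; move: Hn; rewrite negb_exists => /forallP H.
  have : (M.-1 * n <= \sum_v a v)%N.
    have -> : (M.-1 * n = \sum_(v < n) M.-1)%N by rewrite sum_nat_const card_ord mulnC.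
    apply: leq_sum => v _; have := H v; rewrite -leqNgt.
    case: (M) => //= m; rewrite ltnS //.
  by rewrite sum_partition leqNgt hE.
rewrite (bigD1 v0) //= (_ : \sum_(j < M) _ = 0) ?mul0r ?mulr0 //.
apply: etrans (lagr0 (@pt_inj v0) hv0); apply: eq_bigr => j _; exact: mulrC.
Qed.
Lemma Nf_neq0 v j : Nf v j != 0.
Proof.
apply/prodf_neq0 => l hl; rewrite subr_eq0; apply/eqP => /(@pt_inj v) E.
by rewrite E eqxx in hl.
Qed.
End AF.

Lemma AF_notU n (adj : rel 'I_n) M : (#|{: ET adj}| < M.-1 * n)%N -> ~ UkLC adj M.
Proof.
move=> hE [L [hL [c [[cin cpr] cuniq]]]].
have ix v : (index (c v) (L v) < M)%N by rewrite -(proj2 (hL v)) index_mem cin.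
pose g0 : {ffun 'I_n -> 'I_M} := [ffun v => Ordinal (ix v)].
have g0E v : nth 0%N (L v) (g0 v) = c v by rewrite ffunE /= nth_index.
have ptE g v : pt L v (g v) = (nth 0%N (L v) (g v))%:R by [].
have termE g : g != g0 -> Wt L g * Fv adj L g = 0.
  move=> ng; case: (eqVneq (Fv adj L g) 0) => [->|Fn0]; first by rewrite mulr0.
  exfalso; move: ng => /eqP; apply.
  suff Hc : L_coloring adj L (fun v => nth 0%N (L v) (g v)).
    apply/ffunP => v; have := cuniq _ Hc v; rewrite -g0E => /eqP.
    by rewrite nth_uniq ?(proj1 (hL v)) ?(proj2 (hL v)) ?ltn_ord // => /eqP /val_inj.
  split; first by move=> v; rewrite mem_nth // (proj2 (hL v)) ltn_ord.
  move=> u v huv Heq.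
  move/prodf_neq0: Fn0 => Fn0.
  case: (ltngtP u v) => [uv | vu | uv].
  - have Ee : Eset adj (u, v) by rewrite /Eset /= uv huv.
    have := Fn0 (exist (fun p => is_true (Eset adj p)) _ Ee) isT; rewrite /= /pt Heq subrr eqxx //.
  - have Ee : Eset adj (v, u) by rewrite /Eset /= vu huv orbT.
    have := Fn0 (exist (fun p => is_true (Eset adj p)) _ Ee) isT; rewrite /= /pt Heq subrr eqxx //.
  - by have := cpr u v huv; rewrite (val_inj uv).
have sum0 := AF_sum0 hL hE.
rewrite (bigD1 g0) //= big1 ?addr0 in sum0; last by move=> g; apply: termE.
move/eqP: sum0; rewrite mulf_eq0 => /orP [] /negP; apply.
  by apply/negP/prodf_neq0 => v _; rewrite invr_eq0 (Nf_neq0 hL).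
apply/negP/prodf_neq0 => [[[u v] Ee]] _ /=.
rewrite /pt !g0E subr_eq0 eqr_nat; apply/eqP => E.
move: Ee; rewrite /Eset /= => /andP [_ /orP [h|h]].
  exact: (cpr _ _ h E).
exact: (cpr _ _ h (esym E)).
Qed.

Close Scope ring_scope.

Theorem mainTheorem18 (k : nat) (hk : 2 <= k) :
  is_m_number (U_adj k) (k + 1).
Proof.
split; first by rewrite addn1.
split.
  apply: AF_notU; rewrite addn1 /=; exact: edge_count.
move=> j hj1 hjk HM; apply: HM; apply: (UkLC_mono (U_UkLC hk)).
apply/andP; split => //; lia.
Qed.
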